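(* Let $R$ be a discrete valuation domain with maximal ideal $P=Rp$. Then, up to isomorphism, the indecomposable pseudo-absorbing primary multiplication $R$-modules are exactly: (1) $R$; (2) $R/P^n$ for $n\geq1$.
   Context: A proper ideal $I$ of a commutative ring $A$ is 2-absorbing primary if whenever $a,b,c\in A$ and $abc\in I$ then $ab\in I$ or $ac\in\sqrt I$ or $bc\in\sqrt I$. A proper submodule $N$ of an $A$-module $M$ is pseudo-absorbing primary if $(N:_AM)=\{r\in A:rM\subseteq N\}$ is a 2-absorbing primary ideal of $A$. $M$ is a pseudo-absorbing primary multiplication module if for every pseudo-absorbing primary submodule $N$ of $M$ there is an ideal $I$ of $A$ with $N=IM$. *)

(* Defs.v *)
From HB Require Import structures.
From mathcomp Require Import all_boot all_order all_algebra.
Set Implicit Arguments. Unset Strict Implicit. Unset Printing Implicit Defensive.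
Import GRing.Theory.
Local Open Scope ring_scope.

Definition is_ideal (R : comNzRingType) (I : R -> Prop) : Prop :=
  [/\ I 0, (forall x y, I x -> I y -> I (x + y)) & (forall r x, I x -> I (r * x))].

Definition proper_ideal (R : comNzRingType) (I : R -> Prop) : Prop :=
  is_ideal I /\ ~ I 1.

Definition principal (R : comNzRingType) (g : R) : R -> Prop :=
  fun x => exists r, x = r * g.

Definition maximal_ideal (R : comNzRingType) (I : R -> Prop) : Prop :=
  proper_ideal I /\
  forall J, is_ideal J -> (forall x, I x -> J x) ->
    (forall x, J x <-> I x) \/ (forall x, J x).

(* R is a discrete valuation domain with maximal ideal P = Rp:
   a principal ideal domain, not a field, whose unique maximal ideal is Rp. *)
Definition DVD_with_uniformizer (R : idomainType) (p : R) : Prop :=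
  [/\ p != 0,
      (forall I : R -> Prop, is_ideal I -> exists g, forall x, I x <-> principal g x),
      maximal_ideal (principal p) &
      (forall I, maximal_ideal I -> forall x, I x <-> principal p x)].

Definition rad (R : comNzRingType) (I : R -> Prop) : R -> Prop :=
  fun x => exists n : nat, I (x ^+ n).

Definition two_absorbing_primary (R : comNzRingType) (I : R -> Prop) : Prop :=
  proper_ideal I /\
  forall a b c, I (a * b * c) -> I (a * b) \/ rad I (a * c) \/ rad I (b * c).

Definition is_submodule (R : comNzRingType) (M : lmodType R) (N : M -> Prop) : Prop :=
  [/\ N 0, (forall x y, N x -> N y -> N (x + y)) & (forall r x, N x -> N (r *: x))].

Definition proper_submodule (R : comNzRingType) (M : lmodType R) (N : M -> Prop) : Prop :=
  is_submodule N /\ exists m, ~ N m.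

Definition colon (R : comNzRingType) (M : lmodType R) (N : M -> Prop) : R -> Prop :=
  fun r => forall m : M, N (r *: m).

Definition pseudo_absorbing_primary (R : comNzRingType) (M : lmodType R)
  (N : M -> Prop) : Prop :=
  proper_submodule N /\ two_absorbing_primary (colon N).

Definition ideal_mul_module (R : comNzRingType) (M : lmodType R) (I : R -> Prop) : M -> Prop :=
  fun m => exists s : seq (R * M),
    (forall x, x \in s -> I x.1) /\ m = \sum_(x <- s) x.1 *: x.2.

Definition pap_multiplication_module (R : comNzRingType) (M : lmodType R) : Prop :=
  forall N : M -> Prop, pseudo_absorbing_primary N ->
    exists I : R -> Prop, is_ideal I /\ forall m, N m <-> ideal_mul_module I m.

Definition indecomposable (R : comNzRingType) (M : lmodType R) : Prop :=
  (exists m : M, m != 0) /\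
  forall N1 N2 : M -> Prop, is_submodule N1 -> is_submodule N2 ->
    (forall m, exists a b, [/\ N1 a, N2 b & m = a + b]) ->
    (forall m, N1 m -> N2 m -> m = 0) ->
    (forall m, N1 m -> m = 0) \/ (forall m, N2 m -> m = 0).

Definition Rlinear (R : comNzRingType) (M : lmodType R) (f : R -> M) : Prop :=
  forall a x y, f (a * x + y) = a *: f x + f y.

Definition iso_to_R (R : comNzRingType) (M : lmodType R) : Prop :=
  exists f : R -> M, Rlinear f /\ bijective f.

(* M is isomorphic to R / I, expressed as: there is a surjective R-linear map
   R -> M with kernel exactly I (first isomorphism theorem). *)
Definition iso_to_quotient (R : comNzRingType) (M : lmodType R) (I : R -> Prop) : Prop :=
  exists f : R -> M, [/\ Rlinear f, (forall m, exists x, f x = m) &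
                         (forall x, f x = 0 <-> I x)].

(* Main.v *)
From Pilot Require Import Defs.
From mathcomp Require Import all_boot all_order all_algebra.
From mathcomp Require Import ring.
From Stdlib Require Import Classical ClassicalEpsilon.
Import Pilot.Defs.
Set Implicit Arguments. Unset Strict Implicit. Unset Printing Implicit Defensive.
Import GRing.Theory.
Local Open Scope ring_scope.

Section Ring.
Variables (R : idomainType) (p : R).
Hypothesis hR : DVD_with_uniformizer p.

Lemma principal_ideal (g : R) : is_ideal (principal g).
Proof.
split; first by exists 0; rewrite mul0r.
- by move=> x y [a ->] [b ->]; exists (a + b); rewrite mulrDl.
- by move=> r x [a ->]; exists (r * a); rewrite mulrA.
Qed.

Lemma ideal_add (I : R -> Prop) x y : is_ideal I -> I x -> I y -> I (x + y).
Proof. by case=> _ H _; apply: H. Qed.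
Lemma ideal_mul (I : R -> Prop) r x : is_ideal I -> I x -> I (r * x).
Proof. by case=> _ _ H; apply: H. Qed.
Lemma ideal0 (I : R -> Prop) : is_ideal I -> I 0.
Proof. by case. Qed.

Lemma pid (I : R -> Prop) : is_ideal I -> exists g, forall x, I x <-> principal g x.
Proof. by case: hR => _ H _ _; apply: H. Qed.

Lemma p_nonunit : ~ principal p 1.
Proof. by case: hR => _ _ [[_ H] _] _. Qed.

Lemma p_neq0 : p != 0.
Proof. by case: hR. Qed.

Lemma unit_of_principal (x : R) : principal x 1 -> x \is a GRing.unit.
Proof. by case=> r H; apply/unitrPr; exists r; rewrite mulrC -H. Qed.

Lemma principal_unit (x : R) y : x \is a GRing.unit -> principal x y.
Proof. by move=> Hu; exists (y * x^-1); rewrite -mulrA mulVr // mulr1. Qed.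

Lemma p_not_unit : ~ (p \is a GRing.unit).
Proof. by move=> /(principal_unit 1); apply: p_nonunit. Qed.

Lemma principal_trans (a b c : R) : principal a b -> principal b c -> principal a c.
Proof. by move=> [r ->] [s ->]; exists (s * r); rewrite mulrA. Qed.

Lemma locality (x : R) : ~ principal p x -> x \is a GRing.unit.
Proof.
move=> Hx; apply: NNPP => Hxu.
pose P (d : R) := ~ (d \is a GRing.unit) /\ principal d x.
pose Q (d e : R) := [/\ ~ (e \is a GRing.unit), principal e d & ~ principal d e].
have claim : forall d, P d -> maximal_ideal (principal d) \/ exists e, Q d e.
  move=> d [Hdu Hdx].
  case: (classic (maximal_ideal (principal d))) => Hm; [by left | right].
  have : ~ (forall J, is_ideal J -> (forall x, principal d x -> J x) ->
    (forall x, J x <-> principal d x) \/ (forall x, J x)).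
    move=> H; apply: Hm; split=> //; split; first exact: principal_ideal.
    by move/unit_of_principal.
  move/not_all_ex_not => [J HJ].
  have [HJi [HJs [HJn1 HJn2]]] : is_ideal J /\ (forall x, principal d x -> J x) /\
     ~ (forall x, J x <-> principal d x) /\ ~ (forall x, J x).
    by apply: NNPP => H; apply: HJ => Hi Hs; apply: NNPP => H2; apply: H; do 3?split=> //;
       move=> H3; apply: H2; [left|right].
  have [e He] := pid HJi.
  exists e; split.
  - by move=> Heu; apply: HJn2 => y; apply/He/principal_unit.
  - by apply/He/HJs; exists 1; rewrite mul1r.
  - move=> Hde; apply: HJn1 => y; split; last exact: HJs.
    by move/He => Hy; apply: principal_trans Hde Hy.
case: (classic (exists d, P d /\ maximal_ideal (principal d))) => [[d [[_ Hdx] Hm]]|Hno].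
  by apply: Hx; case: hR => _ _ _ H4; apply/(H4 _ Hm).
have H : forall d, exists e, P d -> Q d e.
  move=> d; case: (classic (P d)) => Pd; last by exists d.
  case: (claim d Pd) => [Hm|[e He]]; last by exists e.
  by exfalso; apply: Hno; exists d.
pose step d := proj1_sig (constructive_indefinite_description _ (H d)).
have Hstep d : P d -> Q d (step d) := proj2_sig (constructive_indefinite_description _ (H d)).
pose dn n := iter n step x.
have HP n : P (dn n).
  elim: n => [|n IH]; first by split=> //; exists 1; rewrite mul1r.
  have [A B _] := Hstep _ IH; split=> //=.
  by apply: principal_trans B _; case: IH.
have Hmono n k z : principal (dn n) z -> principal (dn (n + k)%N) z.
  elim: k => [|k IH]; first by rewrite addn0.
  move=> /IH Hz; rewrite addnS /=.
  by have [_ B _] := Hstep _ (HP (n + k)%N); apply: principal_trans B Hz.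
pose U z := exists n, principal (dn n) z.
have HU : is_ideal U.
  split; first by exists 0%N; exists 0; rewrite mul0r.
  - move=> y z [n Hy] [m Hz]; exists (n + m)%N.
    apply: ideal_add; [exact: principal_ideal|exact: Hmono|].
    by rewrite addnC; apply: Hmono.
  - by move=> r y [n Hy]; exists n; apply: ideal_mul => //; apply: principal_ideal.
have [g Hg] := pid HU.
have [N HN] : U g by apply/Hg; exists 1; rewrite mul1r.
have Hs : principal g (dn N.+1) by apply/Hg; exists N.+1; exists 1; rewrite mul1r.
have [_ _ C] := Hstep _ (HP N).
by apply: C; apply: principal_trans HN Hs.
Qed.


Lemma not_all_pow (y : R) : y != 0 -> ~ (forall n, principal (p ^+ n) y).
Proof.
move=> y0 Hall.
pose U z := exists n, principal y (p ^+ n * z).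
have HU : is_ideal U.
  split; first by exists 0%N; exists 0; rewrite mulr0 mul0r.
  - move=> a b [n [r1 H1]] [m [r2 H2]]; exists (n + m)%N.
    exists (p ^+ m * r1 + p ^+ n * r2).
    transitivity (p ^+ m * (p ^+ n * a) + p ^+ n * (p ^+ m * b)); first by rewrite exprD; ring.
    by rewrite H1 H2; ring.
  - move=> r a [n [r1 H1]]; exists n; exists (r * r1).
    by rewrite mulrCA H1 mulrA.
have [g Hg] := pid HU.
have [N [t Ht]] : U g by apply/Hg; exists 1; rewrite mul1r.
have [w Hw] := Hall N.+1.
have [s' Hs] : principal g w.
  by apply/Hg; exists N.+1; exists 1; rewrite mul1r mulrC Hw.
have g0 : g != 0.
  apply/eqP => g0; have [s Hy] : principal g y by apply/Hg; exists 0%N; exists 1; rewrite expr0 !mul1r.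
  by move: y0; rewrite Hy g0 mulr0 eqxx.
apply: p_nonunit; exists (t * s').
have h : p ^+ N * g * 1 = p ^+ N * g * (t * s' * p).
  by rewrite mulr1 {1}Ht Hw Hs exprS; ring.
apply: (mulfI _ h); rewrite mulf_neq0 // expf_neq0 //; exact: p_neq0.
Qed.

Lemma factor (y : R) : y != 0 -> exists k u, u \is a GRing.unit /\ y = u * p ^+ k.
Proof.
move=> y0.
have [k [Hk Hk1]] : exists k, principal (p ^+ k) y /\ ~ principal (p ^+ k.+1) y.
  apply: NNPP => H; apply: (not_all_pow y0); elim=> [|n IH].
    by exists y; rewrite expr0 mulr1.
  by apply: NNPP => H2; apply: H; exists n.
case: Hk => u Hu; exists k, u; split=> //.
apply: locality => -[r Hr]; apply: Hk1; exists r.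
by rewrite Hu Hr exprS; ring.
Qed.

Lemma dvd_total (a b : R) : principal a b \/ principal b a.
Proof.
have [->|a0] := eqVneq a 0; first by right; exists 0; rewrite mul0r.
have [->|b0] := eqVneq b 0; first by left; exists 0; rewrite mul0r.
have [i [u [Hu ->]]] := factor a0.
have [j [v [Hv ->]]] := factor b0.
case: (leqP i j) => Hij.
  left; exists (v * u^-1 * p ^+ (j - i)).
  have -> : p ^+ j = p ^+ i * p ^+ (j - i) by rewrite -exprD subnKC.
  transitivity (v * (p ^+ i * p ^+ (j - i)) * (u^-1 * u)); first by rewrite mulVr // mulr1.
  ring.
right; exists (u * v^-1 * p ^+ (i - j)).
have Hji := ltnW Hij.
have -> : p ^+ i = p ^+ j * p ^+ (i - j) by rewrite -exprD subnKC.
transitivity (u * (p ^+ j * p ^+ (i - j)) * (v^-1 * v)); first by rewrite mulVr // mulr1.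
ring.
Qed.

Lemma all_tap (I : R -> Prop) : proper_ideal I -> two_absorbing_primary I.
Proof.
move=> [HI HI1]; split=> // a b c Habc.
have [g Hg] := pid HI.
have [g0|g0] := eqVneq g 0.
  have Hz z : I z <-> z = 0 by rewrite Hg g0; split=> [[r ->]|->]; [rewrite mulr0|exists 0; rewrite mulr0].
  move/Hz/eqP: Habc; rewrite !mulf_eq0 => /orP[/orP[]|] /eqP H.
  - by left; apply/Hz; rewrite H mul0r.
  - by left; apply/Hz; rewrite H mulr0.
  - by right; left; exists 1%N; apply/Hz; rewrite expr1 H mulr0.
have [k [u [Hu Hgk]]] := factor g0.
have Hpk : I (p ^+ k) by apply/Hg; exists u^-1; rewrite Hgk mulrA mulVr // mul1r.
have Hrad z : principal p z -> rad I z.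
  move=> [r ->]; exists k; rewrite exprMn; exact: ideal_mul.
case: (classic (principal p (a * c))) => Hac; first by right; left; apply: Hrad.
case: (classic (principal p (b * c))) => Hbc; first by right; right; apply: Hrad.
move/locality: Hac; move/locality: Hbc; rewrite !unitrM => /andP[Hb Hc] /andP[Ha _].
left; have -> : a * b = c^-1 * (a * b * c) by rewrite [RHS]mulrC -!mulrA mulrV // mulr1.
exact: ideal_mul.
Qed.


Section Module.
Variable M : lmodType R.

Lemma sub0 (N : M -> Prop) : is_submodule N -> N 0.
Proof. by case. Qed.
Lemma subD (N : M -> Prop) x y : is_submodule N -> N x -> N y -> N (x + y).
Proof. by case=> _ H _; apply: H. Qed.
Lemma subZ (N : M -> Prop) r x : is_submodule N -> N x -> N (r *: x).
Proof. by case=> _ _ H; apply: H. Qed.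

Variable f : R -> M.
Hypothesis Hf : Rlinear f.

Lemma lin0 : f 0 = 0.
Proof. by have := Hf (- (1 : R)) 0 0; rewrite mulr0 addr0 scaleNr scale1r addNr. Qed.
Lemma linD x y : f (x + y) = f x + f y.
Proof. by have := Hf 1 x y; rewrite mul1r scale1r. Qed.
Lemma linM a x : f (a * x) = a *: f x.
Proof. by have := Hf a x 0; rewrite addr0 lin0 addr0. Qed.

Lemma back_dir : (forall m, exists x, f x = m) -> f 1 != 0 ->
  indecomposable M /\ pap_multiplication_module M.
Proof.
move=> Hs H1.
have HJ (N : M -> Prop) : is_submodule N -> is_ideal (fun x => N (f x)).
  move=> HN; split; first by rewrite lin0; apply: sub0.
  - by move=> x y Hx Hy; rewrite linD; apply: subD.
  - by move=> r x Hx; rewrite linM; apply: subZ.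
split.
  split; first by exists (f 1).
  move=> N1 N2 HN1 HN2 _ Hint.
  have [g1 Hg1] := pid (HJ _ HN1).
  have [g2 Hg2] := pid (HJ _ HN2).
  have key (N N' : M -> Prop) g g' : is_submodule N' ->
      (forall x, N (f x) <-> principal g x) -> (forall x, N' (f x) <-> principal g' x) ->
      (forall m, N m -> N' m -> m = 0) -> principal g g' -> forall m, N' m -> m = 0.
    move=> HN' Hg Hg' Hi Hd m Hm.
    have Hz : f g' = 0 by apply: Hi; [apply/Hg|apply/Hg'; exists 1; rewrite mul1r].
    have [x Hx] := Hs m; move: Hm; rewrite -Hx => /Hg' [r ->].
    by rewrite linM Hz scaler0.
  case: (dvd_total g1 g2) => Hd.
    by right; apply: (key N1 N2 g1 g2).
  left; apply: (key N2 N1 g2 g1) => //.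
  by move=> m A B; apply: Hint.
move=> N [[HN _] _].
exists (fun x => N (f x)); split; first exact: HJ.
move=> m; split.
  move=> Hm; have [x Hx] := Hs m.
  exists [:: (x, f 1)]; split; first by move=> y; rewrite inE => /eqP -> /=; rewrite Hx.
  by rewrite big_seq1 /= -linM mulr1.
move=> [s [Hsi ->]]; elim: s Hsi => [|y s IH] Hsi; first by rewrite big_nil; apply: sub0.
rewrite big_cons; apply: subD => //; last by apply: IH => z Hz; apply: Hsi; rewrite inE Hz orbT.
have [z <-] := Hs y.2; rewrite -linM mulrC linM; apply: subZ => //.
by apply: Hsi; rewrite inE eqxx.
Qed.

End Module.

Section Fwd.
Variable M : lmodType R.

Lemma IM_principal (I : R -> Prop) g : (forall x, I x <-> principal g x) ->
  forall m : M, ideal_mul_module I m <-> exists x, m = g *: x.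
Proof.
move=> Hg m; split.
  move=> [s [Hs ->]]; elim: s Hs => [|y s IH] Hs; first by exists 0; rewrite big_nil scaler0.
  have [z Hz] : exists z, \sum_(x0 <- s) x0.1 *: x0.2 = g *: z.
    by apply: IH => z Hz; apply: Hs; rewrite inE Hz orbT.
  have [r Hr] : principal g y.1 by apply/Hg/Hs; rewrite inE eqxx.
  exists (r *: y.2 + z); rewrite big_cons Hz Hr scalerDr scalerA mulrC //.
move=> [x ->]; exists [:: (g, x)]; split; last by rewrite big_seq1.
by move=> y; rewrite inE => /eqP -> /=; apply/Hg; exists 1; rewrite mul1r.
Qed.

Lemma colon_ideal (N : M -> Prop) : is_submodule N -> is_ideal (colon N).
Proof.
move=> HN; split.
- by move=> m; rewrite scale0r; apply: sub0.
- by move=> x y Hx Hy m; rewrite scalerDl; apply: subD.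
- by move=> r x Hx m; rewrite -scalerA; apply: subZ.
Qed.

Lemma mult_sub : pap_multiplication_module M -> forall N : M -> Prop, is_submodule N ->
  exists g, forall m, N m <-> exists x, m = g *: x.
Proof.
move=> Hm N HN.
case: (classic (forall m, N m)) => Hall.
  by exists 1 => m; split=> // _; exists m; rewrite scale1r.
have [m0 Hm0] := not_all_ex_not _ _ Hall.
have Hp : pseudo_absorbing_primary N.
  split; first by split=> //; exists m0.
  apply: all_tap; split; first exact: colon_ideal.
  by move=> H; apply: Hm0; have := H m0; rewrite scale1r.
have [I [HI HIN]] := Hm N Hp.
have [g Hg] := pid HI.
exists g => m; rewrite HIN; exact: IM_principal.
Qed.

Lemma one_sub_unit (r : R) : (1 - p * r) \is a GRing.unit.
Proof.
apply: locality => -[s Hs]; apply: p_nonunit; exists (s + r).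
by rewrite mulrDl -Hs; ring.
Qed.

Lemma cyclic_gen : indecomposable M -> pap_multiplication_module M ->
  exists m0 : M, m0 != 0 /\ forall y, exists r, y = r *: m0.
Proof.
move=> [[m1 Hm1] _] Hmult.
have Rsub (m0 : M) : is_submodule (fun y => exists r, y = r *: m0).
  split; first by exists 0; rewrite scale0r.
  - by move=> x y [a ->] [b ->]; exists (a + b); rewrite scalerDl.
  - by move=> r x [a ->]; exists (r * a); rewrite scalerA.
case: (classic (exists m0 : M, ~ exists x, m0 = p *: x)) => [[m0 Hm0]|HB].
  exists m0; split; first by apply/eqP => H; apply: Hm0; exists 0; rewrite H scaler0.
  have [g Hg] := mult_sub Hmult (Rsub m0).
  have [x Hx] : exists x, m0 = g *: x by apply/Hg; exists 1; rewrite scale1r.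
  case: (classic (principal p g)) => [[r Hr]|Hgp].
    by exfalso; apply: Hm0; exists (r *: x); rewrite Hx Hr scalerA mulrC.
  have Hgu := locality Hgp.
  move=> y; apply/Hg; exists (g^-1 *: y); by rewrite scalerA mulrV // scale1r.
exfalso.
have HB' (y : M) : exists x, y = p *: x by apply: NNPP => H; apply: HB; exists y.
have HBn n (y : M) : exists x, y = p ^+ n *: x.
  elim: n y => [|n IH] y; first by exists y; rewrite expr0 scale1r.
  have [z ->] := HB' y; have [w ->] := IH z; exists w; by rewrite scalerA exprS.
have [g Hg] := mult_sub Hmult (Rsub m1).
have [x Hx] : exists x, m1 = g *: x by apply/Hg; exists 1; rewrite scale1r.
have [g0|g0] := eqVneq g 0.
  by move: Hm1; rewrite Hx g0 scale0r eqxx.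
have [k [u [Hu Hgk]]] := factor g0.
have Hall y : exists r, y = r *: m1.
  apply/Hg; have [z ->] := HBn k y; exists (u^-1 *: z).
  by rewrite scalerA Hgk mulrC mulrA mulVr // mul1r.
have [z Hz] := HB' m1.
have [r Hr] := Hall z.
have : (1 - p * r) *: m1 = 0 by rewrite scalerBl scale1r -scalerA -Hr -Hz subrr.
move=> H; move: Hm1; rewrite -[m1]scale1r -(mulVr (one_sub_unit r)) -scalerA H scaler0 eqxx //.
Qed.

Lemma fwd_dir : indecomposable M -> pap_multiplication_module M ->
  iso_to_R M \/ exists n : nat, (1 <= n)%N /\ iso_to_quotient M (principal (p ^+ n)).
Proof.
move=> Hind Hmult.
have [m0 [Hm0 Hgen]] := cyclic_gen Hind Hmult.
pose f (r : R) := r *: m0.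
have Hf : Rlinear f by move=> a x y; rewrite /f scalerDl scalerA.
have HK : is_ideal (fun x => f x = 0).
  split; first by rewrite /f scale0r.
  - by move=> x y; rewrite /f scalerDl => -> ->; rewrite addr0.
  - by move=> r x; rewrite /f -scalerA => ->; rewrite scaler0.
have [g Hg] := pid HK.
have Hsurj m : exists x, f x = m by have [r ->] := Hgen m; exists r.
have [g0|g0] := eqVneq g 0.
  left; exists f; split=> //.
  have Hinj : injective f.
    move=> a b Hab; apply/eqP; rewrite -subr_eq0; apply/eqP.
    have : f (a - b) = 0 by rewrite /f scalerBl -/(f a) Hab subrr.
    by move/Hg => [r ->]; rewrite g0 mulr0.
  pose h (m : M) := proj1_sig (constructive_indefinite_description _ (Hsurj m)).
  have Hh m : f (h m) = m := proj2_sig (constructive_indefinite_description _ (Hsurj m)).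
  exists h; [by move=> x; apply: Hinj; rewrite Hh | exact: Hh].
right; have [k [u [Hu Hgk]]] := factor g0.
exists k; split.
  case: k Hgk => // Hgk; exfalso; move/eqP: Hm0; apply.
  have H : f 1 = 0 by apply/Hg; exists u^-1; rewrite Hgk expr0 mulr1 mulVr.
  by rewrite /f scale1r in H.
exists f; split=> // x; rewrite Hg; split=> -[r ->].
  by exists (r * u); rewrite Hgk mulrA.
by exists (r * u^-1); rewrite Hgk mulrA -(mulrA r) mulVr // mulr1.
Qed.

End Fwd.

End Ring.

Theorem theorem2p6 (R : idomainType) (p : R) (hR : DVD_with_uniformizer p)
  (M : lmodType R) :
  (indecomposable M /\ pap_multiplication_module M) <->
  (iso_to_R M \/
   exists n : nat, (1 <= n)%N /\ iso_to_quotient M (principal (p ^+ n))).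
Proof.
split; first by move=> [Hi Hm]; exact: fwd_dir.
case=> [[f [Hf [h c1 c2]]]|[n [Hn [f [Hf Hs Hk]]]]].
  apply: (back_dir hR Hf); first by move=> m; exists (h m); rewrite c2.
  apply/eqP => H1; have := lin0 Hf; rewrite -H1 => /(can_inj c1) /eqP.
  by rewrite eq_sym oner_eq0.
apply: (back_dir hR Hf) => //; apply/eqP => /Hk [r Hr]; clear Hk Hs.
apply: (p_nonunit hR); case: n Hn Hr => // n _ Hr; exists (r * p ^+ n).
by rewrite Hr exprSr mulrA.
Qed.
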